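(* For $\lambda>0$ let $\mathbf u^\lambda$ be the unique continuous viscosity solution of $(B+\lambda\,\mathrm{Id})\mathbf u+\mathbb H(x,D\mathbf u)=c(\mathbb H)\mathbbm 1$ in $M$. Then the family $\{\mathbf u^\lambda\mid\lambda>0\}$ is equi-Lipschitz and equi-bounded on $M$. In particular $\|\lambda\mathbf u^\lambda\|_\infty\to0$ as $\lambda\to0^+$, where $\|\mathbf u\|_\infty=\max_i\sup_M|u_i|$.
   Context: Let $M=\mathbb T^N$ be the flat torus, $T^*M=M\times\mathbb R^N$. Let $H_1,\dots,H_m:T^*M\to\mathbb R$ be continuous with $p\mapsto H_i(x,p)$ convex for every $x$, and with coercive $\alpha,\beta:[0,\infty)\to\mathbb R$ such that $\alpha(|p|)\le H_i(x,p)\le\beta(|p|)$ for all $(x,p)$, $i$. Let $B=(b_{ij})$ be a real $m\times m$ matrix with $b_{ij}\le0$ for $j\neq i$, $\sum_j b_{ij}=0$ for every $i$, and irreducible (for every nonempty proper $\mathcal I\subsetneq\{1,\dots,m\}$ there are $i\in\mathcal I$, $j\notin\mathcal I$ with $b_{ij}\ne0$). With $\mathbbm 1=(1,\dots,1)^T$, the system $(B+\lambda\mathrm{Id})\mathbf u+\mathbb H(x,D\mathbf u)=c\mathbbm 1$ means $\sum_jb_{ij}u_j+\lambda u_i+H_i(x,Du_i)=c$ for $i=1,\dots,m$, understood in the viscosity sense for continuous $\mathbf u:M\to\mathbb R^m$ (subsolution: $H_i(x,p)+((B+\lambda\mathrm{Id})\mathbf u(x))_i\le c$ for $p\in D^+u_i(x)$;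 supersolution: $\ge c$ for $p\in D^-u_i(x)$). The critical value $c(\mathbb H)$ is the unique $c$ for which the system with $\lambda=0$ admits a viscosity solution. For $\lambda>0$ a comparison principle holds and the system has a unique continuous solution. *)

(* Defs.v *)
From mathcomp Require Import all_boot.
From Stdlib Require Import Reals.
Open Scope R_scope.

Definition vec (N : nat) := 'I_N -> R.

Definition dot {N} (p q : vec N) : R := \big[Rplus/0]_(k < N) (p k * q k).
Definition enorm {N} (p : vec N) : R := sqrt (dot p p).
Definition vsub {N} (x y : vec N) : vec N := fun k => x k - y k.

(* Functions on the flat torus M = R^N / Z^N are Z^N-periodic functions on R^N. *)
Definition periodic {N} {A : Type} (f : vec N -> A) : Prop :=
  forall (z : 'I_N -> Z) (x : vec N), f (fun k => x k + IZR (z k)) = f x.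

Definition cont_fun {N} (f : vec N -> R) : Prop :=
  forall x eps, 0 < eps -> exists d, 0 < d /\
    forall y, enorm (vsub y x) < d -> Rabs (f y - f x) < eps.

Definition hamiltonians (N m : nat) := 'I_m -> vec N -> vec N -> R.

Definition ham_continuous {N m} (H : hamiltonians N m) : Prop :=
  forall i x p eps, 0 < eps -> exists d, 0 < d /\
    forall y q, enorm (vsub y x) < d -> enorm (vsub q p) < d ->
      Rabs (H i y q - H i x p) < eps.

Definition ham_periodic {N m} (H : hamiltonians N m) : Prop :=
  forall i p, periodic (fun x => H i x p).

Definition ham_convex {N m} (H : hamiltonians N m) : Prop :=
  forall i x (p q : vec N) t, 0 <= t <= 1 ->
    H i x (fun k => t * p k + (1 - t) * q k) <= t * H i x p + (1 - t) * H i x q.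

(* alpha : [0,oo) -> R coercive (only values on [0,oo) matter). *)
Definition coercive (a : R -> R) : Prop :=
  forall K, exists r0, forall r, r0 <= r -> K <= a r.

Definition ham_bounds {N m} (H : hamiltonians N m) (alpha beta : R -> R) : Prop :=
  forall i x p, alpha (enorm p) <= H i x p /\ H i x p <= beta (enorm p).

Definition coupling_matrix {m} (B : 'I_m -> 'I_m -> R) : Prop :=
  (forall i j, i <> j -> B i j <= 0) /\
  (forall i, \big[Rplus/0]_(j < m) B i j = 0) /\
  (forall I : 'I_m -> Prop, (exists i, I i) -> (exists j, ~ I j) ->
     exists i j, I i /\ ~ I j /\ B i j <> 0).

Definition superdiff {N} (u : vec N -> R) (x p : vec N) : Prop :=
  forall eps, 0 < eps -> exists d, 0 < d /\ forall y, enorm (vsub y x) < d ->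
    u y - u x - dot p (vsub y x) <= eps * enorm (vsub y x).

Definition subdiff {N} (u : vec N -> R) (x p : vec N) : Prop :=
  forall eps, 0 < eps -> exists d, 0 < d /\ forall y, enorm (vsub y x) < d ->
    - (eps * enorm (vsub y x)) <= u y - u x - dot p (vsub y x).

Definition sysop {N m} (B : 'I_m -> 'I_m -> R) (lam : R) (u : vec N -> 'I_m -> R)
  (x : vec N) (i : 'I_m) : R :=
  \big[Rplus/0]_(j < m) (B i j * u x j) + lam * u x i.

Definition visc_solution {N m} (H : hamiltonians N m) (B : 'I_m -> 'I_m -> R)
  (lam c : R) (u : vec N -> 'I_m -> R) : Prop :=
  (forall i, cont_fun (fun x => u x i)) /\ periodic u /\
  (forall i x p, superdiff (fun y => u y i) x p -> H i x p + sysop B lam u x i <= c) /\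
  (forall i x p, subdiff (fun y => u y i) x p -> c <= H i x p + sysop B lam u x i).

Definition critical_value {N m} (H : hamiltonians N m) (B : 'I_m -> 'I_m -> R)
  (c : R) : Prop :=
  forall c', (exists u, visc_solution H B 0 c' u) <-> c' = c.

(* Main.v *)
Require Import Defs.
From mathcomp Require Import all_boot.
From Stdlib Require Import Reals.
Open Scope R_scope.

From HB Require Import structures.
From mathcomp Require Import all_order all_algebra.
From mathcomp Require Import all_classical all_reals topology normedtype derive.
From mathcomp Require Import Rstruct Rstruct_topology.
From Stdlib Require Import Reals Lra Lia Psatz FunctionalExtensionality IndefiniteDescription Classical.
Require Import Defs.
Import numFieldNormedType.Exports.

Section Topo.
Import Order.TTheory GRing.Theory Num.Theory.
Local Open Scope classical_set_scope.
Local Open Scope ring_scope.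

Definition ccont (I : finType) (f : (I -> R) -> R) : Prop :=
  forall x eps, Rlt 0 eps -> exists d, Rlt 0 d /\
    forall y, (forall k, Rlt (Rabs (y k - x k)) d) -> Rlt (Rabs (f y - f x)) eps.
Arguments ccont {I} f.

Lemma ccont_continuous (I : finType) (f : {ptws I -> R} -> R^o) :
  ccont f -> continuous f.
Proof.
move=> cf x.
apply/cvgrPdist_lt => e /RltP e0.
have [d [/RltP d0 Hd]] := cf x e e0.
have H : forall k, \forall y \near x, `|x k - y k| < d.
  move=> k.
  have := @proj_continuous I (fun _ => R^o) k x.
  move/cvgrPdist_lt => /(_ d d0). exact.
have HH := @filter_forall _ _ _ _ (nbhs_filter x) H.
near=> y.
have Hy : forall i, `|x i - y i| < d by near: y; exact: HH.
apply/RltP. rewrite -RabsE Rabs_minus_sym. apply: Hd => k.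
rewrite Rabs_minus_sym. move: Hy => /(_ k) /RltP. by rewrite -RabsE.
Unshelve. all: end_near.
Qed.

Lemma evt_box (I : finType) (f : (I -> R) -> R) (a b : I -> R) :
  (forall k, Rle (a k) (b k)) -> ccont f ->
  exists c, (forall k, Rle (a k) (c k) /\ Rle (c k) (b k)) /\
    forall x, (forall k, Rle (a k) (x k) /\ Rle (x k) (b k)) -> Rle (f x) (f c).
Proof.
move=> ab cf.
pose A : set {ptws I -> R} := [set x | forall k, `[a k, b k]%classic (x k)].
have cA : compact.compact A.
  have := (@tychonoff I (fun _ => R) (fun k => `[a k, b k]%classic) (fun k => @segment_compact _ (a k) (b k))).
  exact.
have A0 : A !=set0.
  exists a => k /=; rewrite in_itv /= lexx /=; exact/RleP.
have cont : {within A, continuous (f : {ptws I -> R} -> R)}.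
  apply: continuous_subspaceT => x. have := @ccont_continuous I f cf x. exact.
have [c cA' Hc] := compact_EVT_max A0 cA cont.
rewrite inE in cA'.
exists c; split.
  move=> k; have := cA' k; rewrite /= in_itv /= => /andP [h1 h2]; split; exact/RleP.
move=> x Hx; apply/RleP; apply: Hc; rewrite inE => k /=.
rewrite in_itv /=; case: (Hx k) => h1 h2; apply/andP; split; exact/RleP.
Qed.

Lemma heine_box (I : finType) (f g : (I -> R) -> R) (a b : I -> R) (eta : R) :
  ccont f -> ccont g ->
  (forall z, (forall k, Rle (a k) (z k) /\ Rle (z k) (b k)) -> Rle eta (f z) -> Rlt 0 (g z)) ->
  exists d, Rlt 0 d /\ forall z, (forall k, Rle (a k) (z k) /\ Rle (z k) (b k)) ->
     Rle eta (f z) -> Rle d (g z).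
Proof.
move=> cf cg Hpos.
pose A : set {ptws I -> R} := [set x | forall k, `[a k, b k]%classic (x k)].
have cA : compact.compact A.
  have := (@tychonoff I (fun _ => R) (fun k => `[a k, b k]%classic) (fun k => @segment_compact _ (a k) (b k))).
  exact.
pose B : set {ptws I -> R} := (f : {ptws I -> R} -> R) @^-1` [set x | eta <= x].
have clB : closed B.
  apply: preimage_closed; last exact: closed_ge.
  move=> x _. have := @ccont_continuous I f cf x. exact.
have cAB := compact_closedI cA clB.
have [AB0|/set0P [z0 Hz0]] := eqVneq (A `&` B) set0.
  exists 1%R; split; first exact: Rlt_0_1.
  move=> z Hz Hf. exfalso. have : (A `&` B) z.
    split; last by apply/RleP.
    move=> k /=; rewrite in_itv /=; case: (Hz k) => h1 h2; apply/andP; split; exact/RleP.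
  by rewrite AB0.
have ne : A `&` B !=set0 by exists z0.
have cg' : {within A `&` B, continuous (g : {ptws I -> R} -> R)}.
  apply: continuous_subspaceT => x. have := @ccont_continuous I g cg x. exact.
have [c cAB' Hc] := compact_EVT_min ne cAB cg'.
rewrite inE in cAB'. case: cAB' => cA' cB'.
exists (g c); split.
  apply: Hpos; last by apply/RleP.
  move=> k; have := cA' k; rewrite /= in_itv /= => /andP [h1 h2]; split; exact/RleP.
move=> x Hx Hf; apply/RleP; apply: Hc; rewrite inE; split; last by apply/RleP.
move=> k /=; rewrite in_itv /=; case: (Hx k) => h1 h2; apply/andP; split; exact/RleP.
Qed.

End Topo.
Arguments ccont {I} f.

Open Scope R_scope.
Set Implicit Arguments.
Unset Strict Implicit.

Section Sums.
Variable n : nat.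
Implicit Types F G : 'I_n -> R.
Local Notation S F := (\big[Rplus/0]_(k < n) F k).

Lemma sum_ext F G : (forall k, F k = G k) -> S F = S G.
Proof. move=> h; exact: eq_bigr. Qed.
Lemma sum_add F G : S (fun k => F k + G k) = S F + S G.
Proof. exact: big_split. Qed.
Lemma sum_scal c F : S (fun k => c * F k) = c * S F.
Proof. by rewrite -big_distrr. Qed.
Lemma sum_nonneg F : (forall k, 0 <= F k) -> 0 <= S F.
Proof. move=> h; apply: (big_ind (fun x => 0 <= x)) => //; [lra | move=> x y; lra]. Qed.
Lemma sum_le F G : (forall k, F k <= G k) -> S F <= S G.
Proof. move=> h; apply: (big_ind2 (fun x y => x <= y)) => //; [lra | move=> x1 x2 y1 y2; lra]. Qed.
Lemma sum_term F j : (forall k, 0 <= F k) -> F j <= S F.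
Proof.
move=> h; rewrite (bigD1 j) //=.
match goal with |- _ <= _ + ?s => have : 0 <= s; [|move=> ?; lra] end.
apply: (big_ind (fun x => 0 <= x)) => //; [lra | move=> x y; lra].
Qed.
Lemma sum_abs F : Rabs (S F) <= S (fun k => Rabs (F k)).
Proof.
apply: (big_ind2 (fun x y => Rabs x <= y)).
- rewrite Rabs_R0; lra.
- move=> x1 x2 y1 y2 h1 h2. have := Rabs_triang x1 y1. lra.
- move=> k _; lra.
Qed.
Lemma sum_const c : S (fun _ => c) = INR n * c.
Proof.
rewrite big_const_ord. elim: n => [|m IH] /=; first lra.
rewrite IH. destruct m; simpl; lra.
Qed.
End Sums.

Section Vec.
Context {N : nat}.
Implicit Types p q a h : vec N.

Lemma dot_pos p : 0 <= dot p p.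
Proof. apply: sum_nonneg => k; nra. Qed.
Lemma enorm_pos p : 0 <= enorm p.
Proof. exact: sqrt_pos. Qed.
Lemma enorm_sq p : enorm p * enorm p = dot p p.
Proof. rewrite /enorm; apply: sqrt_sqrt; exact: dot_pos. Qed.
Lemma dot_sym p q : dot p q = dot q p.
Proof. apply: sum_ext => k; ring. Qed.
Lemma dot_scal_l c p q : dot (fun k => c * p k) q = c * dot p q.
Proof. rewrite /dot -sum_scal; apply: sum_ext => k; ring. Qed.
Lemma dot_zero_l q : dot (fun _ => 0) q = 0.
Proof. rewrite /dot (@sum_ext N _ (fun _ => 0)); last (move=> k; ring). rewrite sum_const; ring. Qed.
Lemma dot_lin a h t :
  dot (fun k => a k + t * h k) (fun k => a k + t * h k) =
  dot a a + 2 * t * dot a h + t * t * dot h h.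
Proof.
rewrite /dot (@sum_ext N _ (fun k => (a k * a k + (2 * t) * (a k * h k)) + (t * t) * (h k * h k))); last (move=> k; ring).
by rewrite !sum_add !sum_scal.
Qed.

Lemma coord_le p k : Rabs (p k) <= enorm p.
Proof.
have h1 : p k * p k <= dot p p by apply: (@sum_term N (fun k => p k * p k)) => j; nra.
rewrite -sqrt_Rsqr_abs /Rsqr /enorm. apply: sqrt_le_1_alt. exact: h1.
Qed.

Lemma enorm_small p d : 0 <= d -> (forall k, Rabs (p k) <= d) -> enorm p <= (INR N + 1) * d.
Proof.
move=> d0 hp.
have h1 : dot p p <= INR N * (d * d).
  rewrite /dot -sum_const; apply: sum_le => k.
  have e : p k * p k = Rabs (p k) * Rabs (p k) by rewrite -Rabs_mult Rabs_pos_eq; nra.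
  rewrite e; have := hp k; have := Rabs_pos (p k); nra.
have hN := pos_INR N.
rewrite /enorm -(sqrt_square ((INR N + 1) * d)); last nra.
apply: sqrt_le_1_alt; nra.
Qed.

Lemma enorm_zero_coord p : enorm p = 0 -> forall k, p k = 0.
Proof. move=> h k; have := coord_le p k; rewrite h => h2; have := Rabs_pos (p k); move=> h3.
have [//|hne] := Req_dec (p k) 0. have := Rabs_no_R0 _ hne. lra. Qed.

Lemma dot_zero_vec p q : (forall k, p k = 0) -> dot p q = 0.
Proof. move=> h; rewrite /dot (@sum_ext N _ (fun _ => 0)); last (move=> k; rewrite h; ring).
rewrite sum_const; ring. Qed.

Lemma CS p q : dot p q <= enorm p * enorm q.
Proof.
have [a0|a0] := Req_dec (enorm p) 0.
  rewrite dot_zero_vec; last exact: enorm_zero_coord.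
  rewrite a0; lra.
have [b0|b0] := Req_dec (enorm q) 0.
  rewrite dot_sym dot_zero_vec; last exact: enorm_zero_coord.
  rewrite b0; lra.
have ha := enorm_pos p; have hb := enorm_pos q.
set a := enorm p in a0 ha *; set b := enorm q in b0 hb *.
have hA := enorm_sq p; have hB := enorm_sq q.
have := dot_pos (fun k => p k + (- a / b) * q k).
rewrite dot_lin -hA -hB -/a -/b.
have apos : 0 < a by lra.
have bpos : 0 < b by lra.
set C := dot p q.
have e : - a / b * (- a / b) * (b * b) = a * a by field; lra.
rewrite e => h.
have h2 : 2 * (- a / b) * C = - 2 * a * (C / b) by field; lra.
rewrite h2 in h.
have h3 : C / b <= a by nra.
have : C = (C / b) * b by field; lra.
nra.
Qed.

Lemma enorm_triang p q : enorm (fun k => p k + q k) <= enorm p + enorm q.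
Proof.
have e := dot_lin p q 1.
rewrite (_ : (fun k => p k + 1 * q k) = (fun k => p k + q k)) in e; last first.
  by apply: functional_extensionality => k; ring.
have hc := CS p q; have ha := enorm_pos p; have hb := enorm_pos q.
have hA := enorm_sq p; have hB := enorm_sq q.
rewrite /enorm -(sqrt_square (enorm p + enorm q)); last lra.
apply: sqrt_le_1_alt. rewrite e. nra.
Qed.

Lemma enorm_scal c p : enorm (fun k => c * p k) = Rabs c * enorm p.
Proof.
rewrite /enorm dot_scal_l dot_sym dot_scal_l -Rmult_assoc sqrt_mult_alt; last nra.
by rewrite -/(Rsqr c) sqrt_Rsqr_abs.
Qed.

Lemma enorm_vsub_sym (x y : vec N) : enorm (vsub x y) = enorm (vsub y x).
Proof.
rewrite (_ : vsub y x = (fun k => -1 * vsub x y k)); last first.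
  by apply: functional_extensionality => k; rewrite /vsub; ring.
rewrite enorm_scal Rabs_Ropp Rabs_R1; ring.
Qed.

Lemma enorm_const0 : enorm (fun _ : 'I_N => 0) = 0.
Proof. by rewrite /enorm dot_zero_l sqrt_0. Qed.

Lemma enorm_diff p q : Rabs (enorm p - enorm q) <= enorm (vsub p q).
Proof.
have h1 := enorm_triang q (vsub p q).
rewrite (_ : (fun k => q k + vsub p q k) = p) in h1; last first.
  by apply: functional_extensionality => k; rewrite /vsub; ring.
have h2 := enorm_triang p (vsub q p).
rewrite (_ : (fun k => p k + vsub q p k) = q) in h2; last first.
  by apply: functional_extensionality => k; rewrite /vsub; ring.
rewrite (enorm_vsub_sym q p) in h2.
apply: Rabs_le; lra.
Qed.
End Vec.

Section Cont.
Variable I : finType.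

Definition cmap N (A : (I -> R) -> vec N) := forall e, 0 < e -> exists d, 0 < d /\
  forall x y, (forall k, Rabs (y k - x k) < d) -> forall j, Rabs (A y j - A x j) < e.
Arguments cmap {N} A.

Lemma cmap_sel N (s : 'I_N -> I) : cmap (fun z j => z (s j)).
Proof. move=> e e0; exists e; split => // x y h j; exact: h. Qed.

Lemma cmap_sum N (s1 s2 : 'I_N -> I) : cmap (fun z j => z (s1 j) + z (s2 j)).
Proof.
move=> e e0; exists (e / 2); split; first lra.
move=> x y h j; have h1 := h (s1 j); have h2 := h (s2 j).
have := Rabs_triang (y (s1 j) - x (s1 j)) (y (s2 j) - x (s2 j)).
rewrite (_ : y (s1 j) + y (s2 j) - (x (s1 j) + x (s2 j)) = y (s1 j) - x (s1 j) + (y (s2 j) - x (s2 j))); last ring.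
lra.
Qed.

Lemma cmap_const N (v : vec N) : cmap (fun _ => v).
Proof. move=> e e0; exists 1; split; first lra. move=> x y _ j; rewrite Rminus_diag Rabs_R0; lra. Qed.

Lemma enorm_lt_coords N (p : vec N) e : 0 < e ->
  (forall k, Rabs (p k) < e / (INR N + 2)) -> enorm p < e.
Proof.
move=> e0 h; have hN := pos_INR N.
have d0 : 0 <= e / (INR N + 2) by apply: Rle_mult_inv_pos; lra.
have := @enorm_small N p _ d0 (fun k => Rlt_le _ _ (h k)).
have : (INR N + 1) * (e / (INR N + 2)) < e.
  apply: (Rmult_lt_reg_r (INR N + 2)); first lra.
  field_simplify; lra.
lra.
Qed.

Lemma ccont_comp_fun N (u : vec N -> R) A : cont_fun u -> cmap A -> ccont (fun z => u (A z)).
Proof.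
move=> cu cA x e e0.
have [d [d0 hd]] := cu (A x) e e0.
have hN := pos_INR N.
have [d' [d'0 hd']] := cA (d / (INR N + 2)) ltac:(apply: Rdiv_lt_0_compat; lra).
exists d'; split => // y hy; apply: hd.
apply: enorm_lt_coords => // k; rewrite /vsub; exact: hd'.
Qed.

Lemma ccont_ham N m (H : hamiltonians N m) i A P :
  ham_continuous H -> cmap A -> cmap P -> ccont (fun z => H i (A z) (P z)).
Proof.
move=> cH cA cP x e e0.
have [d [d0 hd]] := cH i (A x) (P x) e e0.
have hN := pos_INR N.
have [d1 [d10 hd1]] := cA (d / (INR N + 2)) ltac:(apply: Rdiv_lt_0_compat; lra).
have [d2 [d20 hd2]] := cP (d / (INR N + 2)) ltac:(apply: Rdiv_lt_0_compat; lra).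
exists (Rmin d1 d2); split; first exact: Rmin_pos.
move=> y hy; apply: hd; apply: enorm_lt_coords => // k; rewrite /vsub.
- apply: hd1 => j; have := hy j; have := Rmin_l d1 d2; lra.
- apply: hd2 => j; have := hy j; have := Rmin_r d1 d2; lra.
Qed.

Lemma ccont_enorm N (A P : (I -> R) -> vec N) :
  cmap A -> cmap P -> ccont (fun z => enorm (vsub (A z) (P z))).
Proof.
move=> cA cP x e e0.
have hN := pos_INR N.
set e' := e / (INR N + 2) / 2.
have e'0 : 0 < e' by rewrite /e'; apply: Rdiv_lt_0_compat; [apply: Rdiv_lt_0_compat|]; lra.
have [d1 [d10 hd1]] := cA e' e'0.
have [d2 [d20 hd2]] := cP e' e'0.
exists (Rmin d1 d2); split; first exact: Rmin_pos.
move=> y hy.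
have hy1 : forall k, Rabs (y k - x k) < d1 by move=> k; have := hy k; have := Rmin_l d1 d2; lra.
have hy2 : forall k, Rabs (y k - x k) < d2 by move=> k; have := hy k; have := Rmin_r d1 d2; lra.
apply: (Rle_lt_trans _ _ _ (enorm_diff _ _)).
apply: enorm_lt_coords => // k; rewrite /vsub.
have h1 := hd1 x y hy1 k; have h2 := hd2 x y hy2 k.
rewrite (_ : A y k - P y k - (A x k - P x k) = (A y k - A x k) + - (P y k - P x k)); last ring.
apply: (Rle_lt_trans _ _ _ (Rabs_triang _ _)); rewrite Rabs_Ropp.
rewrite /e' in h1 h2; lra.
Qed.

Lemma ccont_const c : ccont (fun _ : I -> R => c).
Proof. move=> x e e0; exists 1; split; first lra. move=> y _; rewrite Rminus_diag Rabs_R0; lra. Qed.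

Lemma ccont_add f g : ccont f -> ccont g -> ccont (fun z : I -> R => f z + g z).
Proof.
move=> cf cg x e e0.
have [d1 [d10 h1]] := cf x (e/2) ltac:(lra).
have [d2 [d20 h2]] := cg x (e/2) ltac:(lra).
exists (Rmin d1 d2); split; first exact: Rmin_pos.
move=> y hy.
have := h1 y (fun k => Rlt_le_trans _ _ _ (hy k) (Rmin_l _ _)).
have := h2 y (fun k => Rlt_le_trans _ _ _ (hy k) (Rmin_r _ _)).
rewrite (_ : f y + g y - (f x + g x) = (f y - f x) + (g y - g x)); last ring.
have := Rabs_triang (f y - f x) (g y - g x); lra.
Qed.

Lemma ccont_scal c f : ccont f -> ccont (fun z : I -> R => c * f z).
Proof.
move=> cf x e e0.
have [d [d0 h]] := cf x (e / (Rabs c + 1)) ltac:(apply: Rdiv_lt_0_compat; have := Rabs_pos c; lra).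
exists d; split => // y hy; have := h y hy.
rewrite (_ : c * f y - c * f x = c * (f y - f x)); last ring.
rewrite Rabs_mult => h'.
have hc := Rabs_pos c; have ha := Rabs_pos (f y - f x).
have : Rabs c * Rabs (f y - f x) <= Rabs c * (e / (Rabs c + 1)) by apply: Rmult_le_compat_l; lra.
have : Rabs c * (e / (Rabs c + 1)) < e.
  apply: (Rmult_lt_reg_r (Rabs c + 1)); first lra. field_simplify; lra.
lra.
Qed.

Lemma ccont_abs f : ccont f -> ccont (fun z : I -> R => Rabs (f z)).
Proof.
move=> cf x e e0; have [d [d0 h]] := cf x e e0; exists d; split => // y hy.
have := h y hy; have := Rabs_triang_inv2 (f y) (f x); lra.
Qed.

Lemma ccont_sq f : ccont f -> ccont (fun z : I -> R => f z * f z).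
Proof.
move=> cf x e e0.
set M := 2 * Rabs (f x) + 1.
have M0 : 0 < M by rewrite /M; have := Rabs_pos (f x); lra.
have [d [d0 h]] := cf x (Rmin 1 (e / M)) ltac:(apply: Rmin_pos; [lra|apply: Rdiv_lt_0_compat; lra]).
exists d; split => // y hy; have h1 := h y hy.
have hm1 := Rmin_l 1 (e / M); have hm2 := Rmin_r 1 (e / M).
rewrite (_ : f y * f y - f x * f x = (f y - f x) * (f y + f x)); last ring.
rewrite Rabs_mult.
have h2 : Rabs (f y + f x) <= M.
  rewrite (_ : f y + f x = (f y - f x) + 2 * f x); last ring.
  apply: (Rle_trans _ _ _ (Rabs_triang _ _)). rewrite Rabs_mult (Rabs_right 2); last lra.
  rewrite /M; lra.
have h3 : Rabs (f y - f x) * Rabs (f y + f x) <= Rabs (f y - f x) * M.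
  apply: Rmult_le_compat_l => //; exact: Rabs_pos.
have : Rabs (f y - f x) * M < e / M * M.
  apply: Rmult_lt_compat_r => //; lra.
rewrite (_ : e / M * M = e); last (field; lra).
lra.
Qed.
End Cont.
Arguments cmap {I N} A.

Lemma shift_box N (x : vec N) : exists z : 'I_N -> Z, forall k, 0 <= x k + IZR (z k) <= 1.
Proof.
exists (fun k => (1 - up (x k))%Z) => k.
rewrite minus_IZR; have [h1 h2] := archimed (x k); lra.
Qed.

Lemma cont_ccont N (f : vec N -> R) : cont_fun f -> ccont f.
Proof.
move=> cf x e e0; have [d [d0 hd]] := cf x e e0; have hN := pos_INR N.
exists (d / (INR N + 2)); split; first (apply: Rdiv_lt_0_compat; lra).
move=> y hy; apply: hd; apply: enorm_lt_coords => //.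
Qed.

Lemma periodic_max N (f : vec N -> R) : cont_fun f -> periodic f -> exists c, forall x, f x <= f c.
Proof.
move=> cf pf.
have [c [_ hc]] := @evt_box _ f (fun _ => 0) (fun _ => 1) (fun _ => Rle_0_1) (cont_ccont cf).
exists c => x; have [z hz] := shift_box x.
rewrite -(pf z x); exact: hc.
Qed.

Lemma periodic_min N (f : vec N -> R) : cont_fun f -> periodic f -> exists c, forall x, f c <= f x.
Proof.
move=> cf pf.
have [c [_ hc]] := @evt_box _ (fun x => -1 * f x) (fun _ => 0) (fun _ => 1) (fun _ => Rle_0_1) (ccont_scal (-1) (cont_ccont cf)).
exists c => x; have [z hz] := shift_box x.
rewrite -(pf z x); have := hc _ hz; lra.
Qed.

Lemma periodic_bounded N (f : vec N -> R) : cont_fun f -> periodic f -> exists M, forall x, Rabs (f x) <= M.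
Proof.
move=> cf pf; have [c1 h1] := periodic_max cf pf; have [c2 h2] := periodic_min cf pf.
exists (Rabs (f c1) + Rabs (f c2)) => x; apply: Rabs_le.
have := h1 x; have := h2 x; have := Rabs_pos (f c1); have := Rabs_pos (f c2).
have := Rle_abs (f c1); have := Rle_abs (- f c2); rewrite Rabs_Ropp. lra.
Qed.

Lemma fun_choice (A T : Type) (P : A -> T -> Prop) : (forall a, exists t, P a t) -> exists F : A -> T, forall a, P a (F a).
Proof.
move=> h; exists (fun a => proj1_sig (constructive_indefinite_description _ (h a))) => a.
exact: (proj2_sig (constructive_indefinite_description _ (h a))).
Qed.

Lemma fin_bound m (T : Type) (f : 'I_m -> T -> R) :
  (forall j, exists M, forall t, f j t <= M) -> exists M, forall j t, f j t <= M.
Proof.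
move=> h; have [Mf hM] := fun_choice h.
exists (\big[Rplus/0]_(j < m) Rabs (Mf j)) => j t.
have := hM j t; have := Rle_abs (Mf j); have := @sum_term m (fun j => Rabs (Mf j)) j (fun k => Rabs_pos _).
lra.
Qed.

Lemma fin_pos_min m (P : 'I_m -> R -> Prop) :
  (forall j, exists d, 0 < d /\ P j d) -> (forall j d d', 0 < d' -> d' <= d -> P j d -> P j d') ->
  exists d, 0 < d /\ forall j, P j d.
Proof.
move=> h hmono; have [Df hD] := fun_choice h.
set S := \big[Rplus/0]_(j < m) / Df j.
have S0 : 0 <= S by apply: sum_nonneg => j; have := proj1 (hD j); move=> ?; apply: Rlt_le; apply: Rinv_0_lt_compat.
exists (/ (1 + S)); split; first (apply: Rinv_0_lt_compat; lra).
move=> j; have [d0 hd] := hD j; apply: (hmono j (Df j)) => //.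
  apply: Rinv_0_lt_compat; lra.
have hs := @sum_term m (fun j => / Df j) j (fun k => Rlt_le _ _ (Rinv_0_lt_compat _ (proj1 (hD k)))).
rewrite -/S in hs.
rewrite -(Rinv_inv (Df j)). apply: Rinv_le_contravar; first exact: Rinv_0_lt_compat. lra.
Qed.

Lemma fin_argmax m (i0 : 'I_m) (F : 'I_m -> R) : exists i, forall j, F j <= F i.
Proof.
case: (@Order.TotalTheory.arg_maxP _ R 'I_m i0 xpredT F isT) => i _ Hi.
exists i => j; apply/RleP; exact: Hi.
Qed.

Lemma dot_neg_bound N (w h : vec N) : - (enorm w * enorm h) <= dot w h.
Proof.
have := CS w (fun k => -1 * h k).
rewrite dot_sym dot_scal_l dot_sym enorm_scal Rabs_Ropp Rabs_R1. lra.
Qed.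

Lemma norm_ineq N (w h : vec N) : 0 < enorm w ->
  enorm (fun k => w k + h k) <= enorm w + dot w h / enorm w + dot h h / (2 * enorm w).
Proof.
move=> a0.
set a := enorm w in a0 *.
have hb := enorm_pos h; set b := enorm h in hb.
have hB : dot h h = b * b by rewrite -enorm_sq.
have hA : dot w w = a * a by rewrite -enorm_sq.
have hc := dot_neg_bound w h; rewrite -/a -/b in hc.
set C := dot w h in hc *.
set t := C / a. set s := dot h h / (2 * a).
have et : a * t = C by rewrite /t; field; lra.
have es : 2 * a * s = b * b by rewrite /s hB; field; lra.
have e := dot_lin w h 1.
rewrite (_ : (fun k => w k + 1 * h k) = (fun k => w k + h k)) in e; last first.
  by apply: functional_extensionality => k; ring.
have tb : - b <= t.
  apply: (Rmult_le_reg_l a) => //. rewrite et. nra.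
have Y0 : 0 <= a + t + s.
  have : 0 <= 2 * a * (a + t + s) by nra.
  move=> h1; apply: (Rmult_le_reg_l (2 * a)); lra.
rewrite /enorm -(sqrt_square (a + t + s)) //.
apply: sqrt_le_1_alt. rewrite e -/C hA hB.
have -> : (a + t + s) * (a + t + s) = a * a + 2 * (a * t) + 2 * a * s + (t + s) * (t + s) by ring.
rewrite et es. have := Rle_0_sqr (t + s). rewrite /Rsqr. lra.
Qed.

Lemma lip_claim N (u : vec N -> R) R0 : cont_fun u -> periodic u -> 0 <= R0 ->
  (forall x p, superdiff u x p -> enorm p <= R0) ->
  forall x0 y0 L', R0 < L' -> u y0 - u x0 <= L' * enorm (vsub y0 x0).
Proof.
move=> cu pu R00 hsd x0 y0 L' hL.
have [Mu hMu] := periodic_bounded cu pu.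
have Mu0 : 0 <= Mu by have := hMu x0; have := Rabs_pos (u x0); lra.
have L0 : 0 < L' by lra.
set r := 2 * Mu / L' + 1.
have r0 : 0 < r.
  rewrite /r; have : 0 <= 2 * Mu / L' by apply: Rle_mult_inv_pos; lra.
  lra.
set phi := fun y => u y + (- L') * enorm (vsub y x0).
have cphi : ccont phi.
  apply: ccont_add; first exact: cont_ccont.
  apply: ccont_scal.
  have := @ccont_enorm 'I_N N (fun z j => z j) (fun _ => x0) (cmap_sel (fun j => j)) (cmap_const _ x0). exact.
have [yb [hyb hmax]] := @evt_box _ phi (fun k => x0 k - r) (fun k => x0 k + r) ltac:(move=> k; lra) cphi.
have ex0 : vsub x0 x0 = (fun _ => 0) by apply: functional_extensionality => k; rewrite /vsub; ring.
have phix0 : phi x0 = u x0 by rewrite /phi ex0 enorm_const0; ring.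
have hx0 : phi x0 <= phi yb by apply: hmax => k; lra.
have glob : forall y, phi y <= phi yb.
  move=> y; case: (classic (forall k, x0 k - r <= y k /\ y k <= x0 k + r)) => hy.
    exact: hmax.
  have [k hk] := not_all_ex_not _ _ hy.
  have hk' : r < Rabs (y k - x0 k).
    case: (Rle_or_lt (y k) (x0 k + r)) => h1.
      have h2 : y k < x0 k - r by apply: Rnot_le_lt => h3; apply: hk; split.
      rewrite Rabs_left; lra.
    rewrite Rabs_right; lra.
  have hn := coord_le (vsub y x0) k; rewrite /vsub in hn.
  have := hMu y; have := Rle_abs (u y); have := hMu x0; have := Rle_abs (- u x0); rewrite Rabs_Ropp.
  have : L' * r = 2 * Mu + L' by rewrite /r; field; lra.
  rewrite /phi /vsub in phix0 hx0 *. nra.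
have [a0|a0] := Req_dec (enorm (vsub yb x0)) 0.
  have eyb : yb = x0.
    apply: functional_extensionality => k; have := enorm_zero_coord a0 k; rewrite /vsub; lra.
  have := glob y0; rewrite eyb phix0 /phi. lra.
exfalso.
have apos : 0 < enorm (vsub yb x0) by have := enorm_pos (vsub yb x0); lra.
set a := enorm (vsub yb x0) in a0 apos.
set p := fun k => (L' / a) * vsub yb x0 k.
have hp : enorm p = L'.
  rewrite /p enorm_scal -/a Rabs_right; last (apply: Rle_ge; apply: Rle_mult_inv_pos; lra).
  field; lra.
suff : superdiff u yb p by move/hsd; lra.
move=> e e0; exists (2 * a * e / L'); split; first (apply: Rdiv_lt_0_compat; nra).
move=> y hy.
have hg := glob y; rewrite /phi in hg.
have ey : vsub y x0 = (fun k => vsub yb x0 k + vsub y yb k).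
  by apply: functional_extensionality => k; rewrite /vsub; ring.
rewrite ey in hg.
have hn := norm_ineq (vsub y yb) apos; rewrite -/a in hn.
have hdp : dot p (vsub y yb) = L' / a * dot (vsub yb x0) (vsub y yb) by rewrite /p dot_scal_l.
rewrite hdp.
have hb := enorm_pos (vsub y yb); set b := enorm (vsub y yb) in hb hy *.
have hB : dot (vsub y yb) (vsub y yb) = b * b by rewrite -enorm_sq.
rewrite hB in hn.
set C := dot (vsub yb x0) (vsub y yb) in hn *.
set E := enorm (fun k => vsub yb x0 k + vsub y yb k) in hn hg.
have e1 : L' / a * C = L' * (C / a) by field; lra.
have e2 : L' * (b * b / (2 * a)) <= e * b.
  have : L' * b < 2 * a * e.
    apply: (Rmult_lt_reg_r (/ L')); first (apply: Rinv_0_lt_compat; lra).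
    rewrite (_ : L' * b * / L' = b); last (field; lra).
    exact: hy.
  move=> h1.
  rewrite (_ : L' * (b * b / (2 * a)) = (L' * b) * b / (2 * a)); last (field; lra).
  apply: (Rmult_le_reg_r (2 * a)); first lra.
  rewrite (_ : L' * b * b / (2 * a) * (2 * a) = L' * b * b); last (field; lra).
  nra.
have : L' * E <= L' * (a + C / a + b * b / (2 * a)) by apply: Rmult_le_compat_l; lra.
rewrite e1 => h. rewrite -/a in hg. nra.
Qed.

Lemma lip_of_superdiff N (u : vec N -> R) R0 : cont_fun u -> periodic u -> 0 <= R0 ->
  (forall x p, superdiff u x p -> enorm p <= R0) ->
  forall x y, Rabs (u x - u y) <= R0 * enorm (vsub x y).
Proof.
move=> cu pu R00 hsd.
have key : forall x y, u x - u y <= R0 * enorm (vsub x y).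
  move=> x y; have he := enorm_pos (vsub x y); set E := enorm (vsub x y) in he *.
  case: (Rle_or_lt (u x - u y) (R0 * E)) => // hlt.
  exfalso.
  set t := (u x - u y - R0 * E) / (E + 1).
  have t0 : 0 < t by apply: Rdiv_lt_0_compat; lra.
  have := @lip_claim N u R0 cu pu R00 hsd y x (R0 + t) ltac:(lra).
  rewrite -/E.
  have : t * (E + 1) = u x - u y - R0 * E by rewrite /t; field; lra.
  nra.
move=> x y; apply: Rabs_le; split.
  have := key y x; rewrite enorm_vsub_sym; lra.
exact: key.
Qed.

Lemma Rabs_le_between x y : Rabs x <= y -> - y <= x <= y.
Proof. move=> h; have := Rle_abs x; have := Rle_abs (- x); rewrite Rabs_Ropp; lra. Qed.

Lemma ham_uc N m (H : hamiltonians N m) i Rp eta : ham_continuous H -> ham_periodic H ->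
  0 <= Rp -> 0 < eta ->
  exists d, 0 < d /\ forall x y p, enorm p <= Rp -> enorm (vsub y x) < d ->
    Rabs (H i y p - H i x p) < eta.
Proof.
move=> cH pH Rp0 eta0.
pose I := (('I_N + 'I_N) + 'I_N)%type.
pose sX := fun k : 'I_N => (inl (inl k) : I).
pose sH := fun k : 'I_N => (inl (inr k) : I).
pose sP := fun k : 'I_N => (inr k : I).
pose f := fun z : I -> R => Rabs (H i (fun k => z (sX k) + z (sH k)) (fun k => z (sP k)) + -1 * H i (fun k => z (sX k)) (fun k => z (sP k))).
pose g := fun z : I -> R => enorm (vsub (fun k => z (sH k)) (fun _ : 'I_N => 0)).
have cf : ccont f.
  apply: ccont_abs; apply: ccont_add.
    exact: ccont_ham cH (cmap_sum sX sH) (cmap_sel sP).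
  apply: ccont_scal; exact: ccont_ham cH (cmap_sel sX) (cmap_sel sP).
have cg : ccont g by exact: ccont_enorm (cmap_sel sH) (cmap_const _ _).
pose a := fun s : I => match s with inl (inl _) => 0 | inl (inr _) => -1 | inr _ => - Rp end.
pose b := fun s : I => match s with inl (inl _) => 1 | inl (inr _) => 1 | inr _ => Rp end.
have hpos : forall z, (forall k, a k <= z k <= b k) -> eta <= f z -> 0 < g z.
  move=> z _ hf; case: (Rle_or_lt (g z) 0) => // hg; exfalso.
  have g0 : g z = 0 by have := enorm_pos (vsub (fun k => z (sH k)) (fun _ : 'I_N => 0)); rewrite /g in hg *; lra.
  have e1 : (fun k => z (sX k) + z (sH k)) = (fun k => z (sX k)).
    apply: functional_extensionality => k; have := enorm_zero_coord g0 k; rewrite /vsub => h; lra.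
  move: hf; rewrite /f e1 (_ : forall r : R, r + -1 * r = 0); last (move=> r; ring).
  rewrite Rabs_R0; lra.
have [d [d0 hd]] := @heine_box _ f g a b eta cf cg hpos.
exists (Rmin d 1); split; first (apply: Rmin_pos; lra).
move=> x y p hp hxy.
have [z0 hz0] := shift_box x.
set x' := fun k => x k + IZR (z0 k).
set y' := fun k => y k + IZR (z0 k).
rewrite -(pH i p z0 y) -(pH i p z0 x) -/x' -/y'.
pose zz := fun s : I => match s with inl (inl k) => x' k | inl (inr k) => y k - x k | inr k => p k end.
have ey : (fun k => zz (sX k) + zz (sH k)) = y' by apply: functional_extensionality => k; rewrite /zz /x' /y' /=; ring.
have gz : g zz = enorm (vsub y x).
  rewrite /g; congr enorm; apply: functional_extensionality => k; rewrite /vsub /zz /=; ring.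
have inb : forall k, a k <= zz k <= b k.
  case => [[k|k]|k] /=.
  - exact: hz0.
  - have := coord_le (vsub y x) k; rewrite /vsub => h; have := Rmin_r d 1.
    have := Rabs_le_between (Rle_trans _ _ _ h (Rlt_le _ _ (Rlt_le_trans _ _ _ hxy (Rmin_r d 1)))).
    lra.
  - have := coord_le p k => h. have := Rabs_le_between (Rle_trans _ _ _ h hp). lra.
case: (Rle_or_lt eta (f zz)) => hf.
  have := hd zz inb hf; rewrite gz; have := Rmin_l d 1; lra.
move: hf; rewrite /f ey.
rewrite (_ : H i y' (fun k => zz (sP k)) = H i y' p) //.
rewrite (_ : H i (fun k => zz (sX k)) (fun k => zz (sP k)) = H i x' p) //.
rewrite (_ : H i y' p + -1 * H i x' p = H i y' p - H i x' p) //; ring.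
Qed.

Lemma ham_uc_all N m (H : hamiltonians N m) Rp eta : ham_continuous H -> ham_periodic H ->
  0 <= Rp -> 0 < eta ->
  exists d, 0 < d /\ forall i x y p, enorm p <= Rp -> enorm (vsub y x) < d ->
    Rabs (H i y p - H i x p) < eta.
Proof.
move=> cH pH Rp0 eta0.
have := @fin_pos_min m (fun i d => forall x y p, enorm p <= Rp -> enorm (vsub y x) < d ->
    Rabs (H i y p - H i x p) < eta).
case.
- move=> i; exact: ham_uc.
- move=> i d d' _ hd' h x y p hp hxy; apply: h => //; lra.
move=> d [d0 hd]; exists d; split => // i; exact: hd.
Qed.

Lemma coupling_nonneg m (B : 'I_m -> 'I_m -> R) i (d : 'I_m -> R) :
  (forall j, j <> i -> B i j <= 0) -> \big[Rplus/0]_(j < m) B i j = 0 ->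
  (forall j, d j <= d i) -> 0 <= \big[Rplus/0]_(j < m) (B i j * d j).
Proof.
move=> hB hs hd.
rewrite (@sum_ext m _ (fun j => B i j * (d j - d i) + d i * B i j)); last (move=> j; ring).
rewrite sum_add sum_scal hs Rmult_0_r Rplus_0_r.
apply: sum_nonneg => j; case: (eqVneq j i) => [->|/eqP hji].
  rewrite Rminus_diag; lra.
have := hB j hji; have := hd j; nra.
Qed.

Lemma doubling_max N (f g : vec N -> R) eps : cont_fun f -> periodic f -> cont_fun g -> periodic g ->
  0 < eps -> exists xb yb, forall x y,
  f x - g y - dot (vsub x y) (vsub x y) / (2 * eps) <=
  f xb - g yb - dot (vsub xb yb) (vsub xb yb) / (2 * eps).
Proof.
move=> cf pf cg pg e0.
have [Mf hMf] := periodic_bounded cf pf.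
have [Mg hMg] := periodic_bounded cg pg.
have Mf0 : 0 <= Mf by have := hMf (fun _ => 0); have := Rabs_pos (f (fun _ => 0)); lra.
have Mg0 : 0 <= Mg by have := hMg (fun _ => 0); have := Rabs_pos (g (fun _ => 0)); lra.
set K := 4 * eps * (Mf + Mg).
have K0 : 0 <= K by rewrite /K; nra.
set r := 1 + K.
pose I := ('I_N + 'I_N)%type.
pose sX := fun k : 'I_N => (inl k : I).
pose sY := fun k : 'I_N => (inr k : I).
pose Psi := fun z : I -> R => f (fun k => z (sX k)) + -1 * g (fun k => z (sY k)) +
   (- / (2 * eps)) * (enorm (vsub (fun k => z (sX k)) (fun k => z (sY k))) *
                     enorm (vsub (fun k => z (sX k)) (fun k => z (sY k)))).
have cPsi : ccont Psi.
  apply: ccont_add; first apply: ccont_add.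
  - exact: ccont_comp_fun cf (cmap_sel sX).
  - apply: ccont_scal; exact: ccont_comp_fun cg (cmap_sel sY).
  - apply: ccont_scal; apply: ccont_sq; exact: ccont_enorm (cmap_sel sX) (cmap_sel sY).
pose a := fun s : I => match s with inl _ => 0 | inr _ => - r end.
pose b := fun s : I => match s with inl _ => 1 | inr _ => 1 + r end.
have ab : forall k, a k <= b k by case => k /=; rewrite /r; lra.
have [zb [hzb hmax]] := @evt_box _ Psi a b ab cPsi.
set Phi := fun x y => f x - g y - dot (vsub x y) (vsub x y) / (2 * eps).
pose pr := fun (x y : vec N) (s : I) => match s with inl k => x k | inr k => y k end.
have ePsi : forall x y, Psi (pr x y) = Phi x y.
  move=> x y; rewrite /Psi /Phi /= enorm_sq.
  change (f x + -1 * g y + - / (2 * eps) * dot (vsub x y) (vsub x y) = f x - g y - dot (vsub x y) (vsub x y) / (2 * eps)).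
  field; lra.
exists (fun k => zb (sX k)), (fun k => zb (sY k)).
have hzb' : Phi (fun k => zb (sX k)) (fun k => zb (sY k)) = Psi zb by rewrite -ePsi.
move=> x y.
rewrite -/(Phi x y) -/(Phi (fun k => zb (sX k)) (fun k => zb (sY k))) hzb'.
have h00 : Phi (fun _ => 0) (fun _ => 0) <= Psi zb.
  rewrite -ePsi; apply: hmax; case => k /=; rewrite /r; lra.
have hD := dot_pos (vsub x y).
set D := dot (vsub x y) (vsub x y) in hD.
case: (Rle_or_lt D K) => hDK; last first.
  apply: Rle_trans h00.
  have ev : vsub (fun _ : 'I_N => 0) (fun _ => 0) = (fun _ => 0).
    by apply: functional_extensionality => k; rewrite /vsub; ring.
  rewrite /Phi ev dot_zero_l.
  have := hMf x; have := Rle_abs (f x); have := hMg y; have := Rle_abs (- g y); rewrite Rabs_Ropp.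
  have := hMf (fun _ => 0); have := Rle_abs (- f (fun _ => 0)); rewrite Rabs_Ropp.
  have := hMg (fun _ => 0); have := Rle_abs (g (fun _ => 0)).
  have : K / (2 * eps) = 2 * (Mf + Mg) by rewrite /K; field; lra.
  have : K / (2 * eps) < D / (2 * eps) by apply: Rmult_lt_compat_r => //; apply: Rinv_0_lt_compat; lra.
  rewrite -/D. lra.
have [z0 hz0] := shift_box x.
set x' := fun k => x k + IZR (z0 k).
set y' := fun k => y k + IZR (z0 k).
have eP : Phi x y = Phi x' y'.
  rewrite /Phi (pf z0 x) (pg z0 y); congr (_ - _ - dot _ _ / _);
  by apply: functional_extensionality => k; rewrite /vsub /x' /y'; ring.
rewrite eP -ePsi; apply: hmax; case => k /=.
  exact: hz0.
have hk : (vsub x y k) * (vsub x y k) <= D by apply: (@sum_term N (fun k => vsub x y k * vsub x y k)) => j; nra.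
rewrite /vsub in hk.
have hk2 : Rabs (y k - x k) <= 1 + D.
  have e1 : Rabs (y k - x k) * Rabs (y k - x k) = (x k - y k) * (x k - y k).
    rewrite -Rabs_mult Rabs_pos_eq; [ring | have := Rle_0_sqr (y k - x k); rewrite /Rsqr; lra].
  have := Rabs_pos (y k - x k); have := Rle_0_sqr (Rabs (y k - x k) - 1); rewrite /Rsqr; nra.
have := Rabs_le_between hk2; have := hz0 k; rewrite /y' /r; lra.
Qed.

Lemma comp_periodic N m (u : vec N -> 'I_m -> R) i : periodic u -> periodic (fun x => u x i).
Proof. move=> pu z x /=; by rewrite (pu z x). Qed.

Lemma sysop_diff N m (B : 'I_m -> 'I_m -> R) l1 l2 (u v : vec N -> 'I_m -> R) x y i :
  sysop B l1 u x i - sysop B l2 v y i =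
  \big[Rplus/0]_(j < m) (B i j * (u x j - v y j)) + (l1 * u x i - l2 * v y i).
Proof.
rewrite /sysop (@sum_ext m (fun j => B i j * (u x j - v y j)) (fun j => B i j * u x j + -1 * (B i j * v y j))); last (move=> j; ring).
rewrite sum_add sum_scal; ring.
Qed.

Lemma doubling N m (H : hamiltonians N m) (B : 'I_m -> 'I_m -> R) l1 l2 c
  (u v : vec N -> 'I_m -> R) L (i0 : 'I_m) :
  ham_continuous H -> ham_periodic H ->
  (forall i j, i <> j -> B i j <= 0) -> (forall i, \big[Rplus/0]_(j < m) B i j = 0) ->
  (forall i, cont_fun (fun x => u x i)) -> periodic u ->
  (forall i x p, superdiff (fun y => u y i) x p -> H i x p + sysop B l1 u x i <= c) ->
  (forall i, cont_fun (fun x => v x i)) -> periodic v ->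
  (forall i x p, subdiff (fun y => v y i) x p -> c <= H i x p + sysop B l2 v x i) ->
  0 <= L ->
  ((forall i x y, Rabs (u x i - u y i) <= L * enorm (vsub x y)) \/
   (forall i x y, Rabs (v x i - v y i) <= L * enorm (vsub x y))) ->
  forall eta, 0 < eta -> exists i xb yb,
    (forall j x, u x j - v x j <= u xb i - v yb i) /\ l1 * u xb i - l2 * v yb i <= eta.
Proof.
move=> cH pH hB hBs cu pu hsub cv pv hsup L0 hLip eta eta0.
have [d [d0 hd]] := @ham_uc_all N m H (2 * L + 1) eta cH pH ltac:(lra) eta0.
set eps := d / (2 * L + 2).
have eps0 : 0 < eps by rewrite /eps; apply: Rdiv_lt_0_compat; lra.
set Phi := fun i x y => u x i - v y i - dot (vsub x y) (vsub x y) / (2 * eps).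
have hex : forall i, exists xy : vec N * vec N, forall x y, Phi i x y <= Phi i xy.1 xy.2.
  move=> i; have [xb [yb h]] := doubling_max (cu i) (comp_periodic i pu) (cv i) (comp_periodic i pv) eps0.
  by exists (xb, yb).
have [XY hXY] := fun_choice hex.
have [i hi] := fin_argmax i0 (fun i => Phi i (XY i).1 (XY i).2).
set xb := (XY i).1; set yb := (XY i).2.
have hall : forall j x y, Phi j x y <= Phi i xb yb.
  move=> j x y; apply: Rle_trans (hXY j x y) _; exact: hi.
have hD := dot_pos (vsub xb yb).
have ezero : forall x : vec N, vsub x x = (fun _ => 0).
  by move=> x; apply: functional_extensionality => k; rewrite /vsub; ring.
have i2e : 0 < 2 * eps by lra.
have dpos : forall X, 0 <= X -> 0 <= X / (2 * eps).
  by move=> X hX; apply: Rle_mult_inv_pos.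
exists i, xb, yb; split.
  move=> j x; have := hall j x x; rewrite /Phi ezero dot_zero_l.
  have := dpos _ hD. rewrite /Rdiv Rmult_0_l. lra.
set e := enorm (vsub xb yb).
have he0 : 0 <= e := enorm_pos _.
have hDe : dot (vsub xb yb) (vsub xb yb) = e * e by rewrite -enorm_sq.
set D := dot (vsub xb yb) (vsub xb yb) in hD hDe.
have h1 : D / (2 * eps) <= v xb i - v yb i.
  have := hall i xb xb; rewrite /Phi ezero dot_zero_l -/D /Rdiv Rmult_0_l. lra.
have h2 : D / (2 * eps) <= u xb i - u yb i.
  have := hall i yb yb; rewrite /Phi ezero dot_zero_l -/D /Rdiv Rmult_0_l. lra.
have hLe : D / (2 * eps) <= L * e.
  case: hLip => hl.
    have := hl i xb yb; rewrite -/e => h; have := Rle_abs (u xb i - u yb i); lra.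
  have := hl i xb yb; rewrite -/e => h; have := Rle_abs (v xb i - v yb i); lra.
have he : e <= 2 * eps * L.
  have hh : e * e <= 2 * eps * L * e.
    rewrite -hDe; have : D = D / (2 * eps) * (2 * eps) by field; lra.
    move=> ->; nra.
  case: (Req_dec e 0) => [->|hne]; first nra.
  have : 0 < e by lra.
  move=> ep; apply: (Rmult_le_reg_r e) => //; lra.
set p := fun k => / eps * vsub xb yb k.
have hp : enorm p <= 2 * L + 1.
  rewrite /p enorm_scal -/e Rabs_pos_eq; last (apply: Rlt_le; apply: Rinv_0_lt_compat; lra).
  have : / eps * e <= / eps * (2 * eps * L) by apply: Rmult_le_compat_l; [apply: Rlt_le; apply: Rinv_0_lt_compat|]; lra.
  rewrite (_ : / eps * (2 * eps * L) = 2 * L); last (field; lra).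
  lra.
have hsd : superdiff (fun y => u y i) xb p.
  move=> ee ee0; exists (2 * eps * ee); split; first nra.
  move=> y hy.
  have hg := hall i y yb; rewrite /Phi in hg.
  have ey : vsub y yb = (fun k => vsub xb yb k + 1 * vsub y xb k).
    by apply: functional_extensionality => k; rewrite /vsub; ring.
  rewrite ey dot_lin -/D in hg.
  have hb := enorm_pos (vsub y xb); set b := enorm (vsub y xb) in hb hy *.
  have hB2 : dot (vsub y xb) (vsub y xb) = b * b by rewrite -enorm_sq.
  rewrite hB2 in hg.
  rewrite /p dot_scal_l.
  set C := dot (vsub xb yb) (vsub y xb) in hg *.
  have e1 : (D + 2 * 1 * C + 1 * 1 * (b * b)) / (2 * eps) = D / (2 * eps) + / eps * C + b * b / (2 * eps) by field; lra.
  rewrite e1 in hg.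
  have e2 : b * b / (2 * eps) <= ee * b.
    apply: (Rmult_le_reg_r (2 * eps)) => //.
    rewrite (_ : b * b / (2 * eps) * (2 * eps) = b * b); last (field; lra).
    nra.
  lra.
have hsb : subdiff (fun y => v y i) yb p.
  move=> ee ee0; exists (2 * eps * ee); split; first nra.
  move=> y hy.
  have hg := hall i xb y; rewrite /Phi in hg.
  have ey : vsub xb y = (fun k => vsub xb yb k + -1 * vsub y yb k).
    by apply: functional_extensionality => k; rewrite /vsub; ring.
  rewrite ey dot_lin -/D in hg.
  have hb := enorm_pos (vsub y yb); set b := enorm (vsub y yb) in hb hy *.
  have hB2 : dot (vsub y yb) (vsub y yb) = b * b by rewrite -enorm_sq.
  rewrite hB2 in hg.
  rewrite /p dot_scal_l.
  set C := dot (vsub xb yb) (vsub y yb) in hg *.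
  have e1 : (D + 2 * -1 * C + -1 * -1 * (b * b)) / (2 * eps) = D / (2 * eps) - / eps * C + b * b / (2 * eps) by field; lra.
  rewrite e1 in hg.
  have e2 : b * b / (2 * eps) <= ee * b.
    apply: (Rmult_le_reg_r (2 * eps)) => //.
    rewrite (_ : b * b / (2 * eps) * (2 * eps) = b * b); last (field; lra).
    nra.
  lra.
have k1 := hsub i xb p hsd.
have k2 := hsup i yb p hsb.
have k3 := sysop_diff B l1 l2 u v xb yb i.
have k4 : 0 <= \big[Rplus/0]_(j < m) (B i j * (u xb j - v yb j)).
  apply: coupling_nonneg; [move=> j hj; apply: hB; exact: nesym | exact: hBs |].
  move=> j; have := hall j xb yb; rewrite /Phi; lra.
have k5 : Rabs (H i yb p - H i xb p) < eta.
  apply: hd => //; rewrite enorm_vsub_sym -/e.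
  have : 2 * eps * L < d.
    rewrite /eps (_ : 2 * (d / (2 * L + 2)) * L = d * (2 * L / (2 * L + 2))); last (field; lra).
    have : 2 * L / (2 * L + 2) < 1.
      apply: (Rmult_lt_reg_r (2 * L + 2)); first lra.
      rewrite (_ : 2 * L / (2 * L + 2) * (2 * L + 2) = 2 * L); last (field; lra). lra.
    nra.
  lra.
have := Rle_abs (H i yb p - H i xb p).
lra.
Qed.

Lemma coercive_bound (alpha : R -> R) C : coercive alpha ->
  exists R0, 0 <= R0 /\ forall r, alpha r <= C -> r <= R0.
Proof.
move=> ca; have [r0 hr0] := ca (C + 1).
exists (Rmax r0 0); split; first exact: Rmax_r.
move=> r hr; case: (Rle_or_lt r (Rmax r0 0)) => // hlt.
have := hr0 r (Rlt_le _ _ (Rle_lt_trans _ _ _ (Rmax_l r0 0) hlt)); lra.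
Qed.

Lemma le_of_eps a b : (forall t, 0 < t -> a <= b + t) -> a <= b.
Proof.
move=> h; case: (Rle_or_lt a b) => // hlt.
have := h ((a - b) / 2) ltac:(lra); lra.
Qed.

Lemma main_aux (N m : nat) (H : hamiltonians N m) (alpha beta : R -> R)
  (B : 'I_m -> 'I_m -> R) (c : R) (u : R -> vec N -> 'I_m -> R) (i0 : 'I_m) :
  ham_continuous H -> ham_periodic H ->
  coercive alpha -> ham_bounds H alpha beta ->
  (forall i j, i <> j -> B i j <= 0) -> (forall i, \big[Rplus/0]_(j < m) B i j = 0) ->
  (exists w, visc_solution H B 0 c w) ->
  (forall lam, 0 < lam -> visc_solution H B lam c (u lam)) ->
  (exists L K : R,
     forall lam, 0 < lam -> forall i x y,
       Rabs (u lam x i - u lam y i) <= L * enorm (vsub x y) /\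
       Rabs (u lam x i) <= K) /\
  (forall eps, 0 < eps -> exists delta, 0 < delta /\
     forall lam, 0 < lam < delta -> forall i x, Rabs (lam * u lam x i) <= eps).
Proof.
move=> cH pH ca hbd hB1 hB2 [w [cw [pw [subw superw]]]] hsol.
have [Kw hKw] : exists Kw, forall j x, Rabs (w x j) <= Kw.
  apply: (@fin_bound m (vec N) (fun j x => Rabs (w x j))) => j.
  exact: periodic_bounded (cw j) (comp_periodic j pw).
have Kw0 : 0 <= Kw by have := hKw i0 (fun _ => 0); have := Rabs_pos (w (fun _ => 0) i0); lra.
have [SB hSB] : exists SB, forall i (t : unit), \big[Rplus/0]_(j < m) Rabs (B i j) <= SB.
  apply: (@fin_bound m unit (fun i _ => \big[Rplus/0]_(j < m) Rabs (B i j))) => i.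
  by exists (\big[Rplus/0]_(j < m) Rabs (B i j)) => _; lra.
have SB0 : 0 <= SB by have := hSB i0 tt; have := sum_nonneg (fun j => Rabs_pos (B i0 j)); lra.
have sysb : forall (z : vec N -> 'I_m -> R) K, 0 <= K -> (forall x j, Rabs (z x j) <= K) ->
    forall x i, Rabs (\big[Rplus/0]_(j < m) (B i j * z x j)) <= SB * K.
  move=> z K K0 hz x i.
  apply: (Rle_trans _ _ _ (sum_abs _)).
  apply: (Rle_trans _ (\big[Rplus/0]_(j < m) (K * Rabs (B i j)))).
    apply: sum_le => j; rewrite Rabs_mult.
    have := hz x j; have := Rabs_pos (B i j); have := Rabs_pos (z x j); nra.
  rewrite sum_scal; have := hSB i tt; nra.
have [Rw [Rw0 hRw]] := @coercive_bound alpha (c + SB * Kw) ca.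
have lipw : forall j x y, Rabs (w x j - w y j) <= Rw * enorm (vsub x y).
  move=> j; apply: lip_of_superdiff (cw j) (comp_periodic j pw) Rw0 _ => x p hp.
  apply: hRw; have := subw j x p hp; rewrite /sysop Rmult_0_l Rplus_0_r.
  have := sysb w Kw Kw0 (fun x j => hKw j x) x j; have := proj1 (hbd j x p).
  move=> h1 h2 h3. have := Rle_abs (- \big[Rplus/0]_(j0 < m) (B j j0 * w x j0)). rewrite Rabs_Ropp. lra.
set K := 2 * Kw.
have hK : forall lam, 0 < lam -> forall j x, Rabs (u lam x j) <= K.
  move=> lam l0 j x.
  have [cu [pu [subu superu]]] := hsol lam l0.
  apply: Rabs_le; split.
  - apply: Ropp_le_cancel; rewrite Ropp_involutive.
    apply: le_of_eps => t t0.
    have [i [xb [yb [h1 h2]]]] := doubling i0 cH pH hB1 hB2 cw pw subw cu pu superu Rw0 (or_introl lipw) (Rmult_lt_0_compat _ _ l0 t0).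
    have := h1 j x; have := Rabs_le_between (hKw j x); have := Rabs_le_between (hKw i xb).
    have : - u lam yb i <= t.
      apply: (Rmult_le_reg_l lam) => //; nra.
    rewrite /K; lra.
  - apply: le_of_eps => t t0.
    have [i [xb [yb [h1 h2]]]] := doubling i0 cH pH hB1 hB2 cu pu subu cw pw superw Rw0 (or_intror lipw) (Rmult_lt_0_compat _ _ l0 t0).
    have := h1 j x; have := Rabs_le_between (hKw j x); have := Rabs_le_between (hKw i yb).
    have : u lam xb i <= t.
      apply: (Rmult_le_reg_l lam) => //; lra.
    rewrite /K; lra.
have K0 : 0 <= K by rewrite /K; lra.
have hlow : forall lam, 0 < lam -> forall j x, c - beta 0 <= lam * u lam x j.
  move=> lam l0.
  have [cu [pu [subu superu]]] := hsol lam l0.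
  have hmin : forall j, exists x0, forall x, u lam x0 j <= u lam x j.
    move=> j; exact: periodic_min (cu j) (comp_periodic j pu).
  have [X hX] := fun_choice hmin.
  have [i hi] := fin_argmax i0 (fun j => - u lam (X j) j).
  set x0 := X i.
  have hglob : forall j x, u lam x0 i <= u lam x j.
    move=> j x; have := hi j; have := hX j x; rewrite /x0 /=; lra.
  have hsd : subdiff (fun y => u lam y i) x0 (fun _ => 0).
    move=> e e0; exists 1; split; first lra.
    move=> y _; rewrite dot_zero_l; have := hglob i y; have := enorm_pos (vsub y x0).
    move=> h1 h2; have : 0 <= e * enorm (vsub y x0) by apply: Rmult_le_pos; lra.
    lra.
  have k1 := superu i x0 _ hsd.
  have k2 : H i x0 (fun _ => 0) <= beta 0.
    have := proj2 (hbd i x0 (fun _ => 0)); by rewrite enorm_const0.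
  have k3 : 0 <= \big[Rplus/0]_(j < m) (B i j * - u lam x0 j).
    apply: coupling_nonneg; [move=> j hj; apply: hB1; exact: nesym | exact: hB2 |].
    move=> j; have := hglob j x0; lra.
  rewrite (@sum_ext m _ (fun j => -1 * (B i j * u lam x0 j))) in k3; last (move=> j; ring).
  rewrite sum_scal in k3.
  rewrite /sysop in k1.
  move=> j x; have h := hglob j x.
  have : lam * u lam x0 i <= lam * u lam x j by apply: Rmult_le_compat_l; lra.
  lra.
have [Ru [Ru0 hRu]] := @coercive_bound alpha (SB * K + beta 0) ca.
split.
  exists Ru, K => lam l0 i x y; split; last exact: hK.
  have [cu [pu [subu superu]]] := hsol lam l0.
  move: x y; apply: lip_of_superdiff (cu i) (comp_periodic i pu) Ru0 _ => x' p hp.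
  apply: hRu; have := subu i x' p hp; rewrite /sysop.
  have := sysb (u lam) K K0 (fun x j => hK lam l0 j x) x' i; have := proj1 (hbd i x' p).
  have := hlow lam l0 i x'.
  move=> h0 h1 h2 h3. have := Rle_abs (- \big[Rplus/0]_(j0 < m) (B i j0 * u lam x' j0)). rewrite Rabs_Ropp. lra.
move=> eps e0; exists (eps / (K + 1)); split; first (apply: Rdiv_lt_0_compat; lra).
move=> lam [l0 hl] i x.
rewrite Rabs_mult Rabs_pos_eq; last lra.
have := hK lam l0 i x; have := Rabs_pos (u lam x i) => h1 h2.
have : lam * Rabs (u lam x i) <= lam * K by apply: Rmult_le_compat_l; lra.
have : lam * K <= eps / (K + 1) * K by apply: Rmult_le_compat_r; lra.
have : eps / (K + 1) * K <= eps.
  apply: (Rmult_le_reg_r (K + 1)); first lra.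
  rewrite (_ : eps / (K + 1) * K * (K + 1) = eps * K); last (field; lra).
  nra.
lra.
Qed.


Theorem proposition1p3 (N m : nat) (H : hamiltonians N m) (alpha beta : R -> R)
  (B : 'I_m -> 'I_m -> R) (c : R) (u : R -> vec N -> 'I_m -> R) :
  ham_continuous H -> ham_periodic H -> ham_convex H ->
  coercive alpha -> coercive beta -> ham_bounds H alpha beta ->
  coupling_matrix B ->
  critical_value H B c ->
  (forall lam, 0 < lam -> visc_solution H B lam c (u lam)) ->
  (exists L K : R,
     forall lam, 0 < lam -> forall i x y,
       Rabs (u lam x i - u lam y i) <= L * enorm (vsub x y) /\
       Rabs (u lam x i) <= K) /\
  (forall eps, 0 < eps -> exists delta, 0 < delta /\
     forall lam, 0 < lam < delta -> forall i x, Rabs (lam * u lam x i) <= eps).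
Proof.
move=> cH pH _ ca _ hbd [hB1 [hB2 _]] hcrit hsol.
have hw : exists w, visc_solution H B 0 c w by apply/(hcrit c).
destruct m as [|m].
  split.
    exists 0, 0 => lam _ [k hk]; by [].
  move=> eps e0; exists 1; split; first lra.
  by move=> lam _ [k hk].
exact: (@main_aux N m.+1 H alpha beta B c u ord0 cH pH ca hbd hB1 hB2 hw hsol).
Qed.
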